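(* Let $A$ be a finite alphabet, $\gamma\in(0,1]$, and let $q_\gamma$ be the map associated with the shuffle Hopf algebra $\mathcal H^A_{\sqcup\!\sqcup}$ with its basis of words. There exists a constant $C_\gamma\ge1$ depending only on $\gamma$ such that for every nonempty word $w\in A^*$, $$|q_\gamma(w)|\le\frac{C_\gamma^{|w|-1}}{(|w|!)^{\gamma}}.$$
   Context: $\mathcal H^A_{\sqcup\!\sqcup}$ is the vector space with basis the set $A^*$ of words on $A$ (including the empty word $\mathbf 1$), graded by word length $|w|$, with shuffle product ($\mathbf 1\sqcup\!\sqcup w=w\sqcup\!\sqcup\mathbf 1=w$, $(av)\sqcup\!\sqcup(bw)=a(v\sqcup\!\sqcup bw)+b(av\sqcup\!\sqcup w)$ for letters $a,b$) and deconcatenation coproduct $\Delta(w)=\sum_{uv=w}u\otimes v$. Its inverse-factorial character is $q(w)=1/|w|!$. Let $N=\lfloor1/\gamma\rfloor$. The linear map $q_\gamma$ is defined on words by $q_\gamma(w)=q(w)=1/|w|!$ if $|w|\le N$ and recursively $q_\gamma(w)=\frac{1}{2^{\gamma|w|}-2}\sum_{uv=w,\ u,v\ne\mathbf 1}q_\gamma(u)q_\gamma(v)$ if $|w|\ge N+1$. *)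

(* Defs.v *)
From Stdlib Require Import Reals Lra Lia List Arith FinFun.
Import ListNotations.
Open Scope R_scope.

(* N = floor(1/gamma); Int_part r = up r - 1 is the floor of r. *)
Definition Ngam (gamma : R) : nat := Z.to_nat (Int_part (/ gamma)).

Definition sumR (l : list R) : R := fold_right Rplus 0 l.

Definition qchar {A : Type} (w : list A) : R := / INR (fact (length w)).

(* q_gamma computed with fuel (fuel > |w| suffices, since the recursion
   only calls q_gamma on proper nonempty prefixes/suffixes u, v with uv = w).
   The sum over deconcatenations uv = w with u, v <> 1 is the sum over
   k = 1 .. |w|-1 of (firstn k w, skipn k w). *)
Fixpoint qgam_fuel {A : Type} (gamma : R) (fuel : nat) (w : list A) : R :=
  match fuel with
  | O => 0
  | S f =>
      if Nat.leb (length w) (Ngam gamma) then qchar w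
      else / (Rpower 2 (gamma * INR (length w)) - 2) *
           sumR (map (fun k => qgam_fuel gamma f (firstn k w) *
                               qgam_fuel gamma f (skipn k w))
                     (seq 1 (length w - 1)))
  end.

Definition qgam {A : Type} (gamma : R) (w : list A) : R :=
  qgam_fuel gamma (S (length w)) w.

(* Main.v *)
Require Import Defs.
From Stdlib Require Import Reals Arith List FinFun Lra Lia ZArith.
Open Scope R_scope.

Lemma exp_le_mono x y : x <= y -> exp x <= exp y.
Proof. intros [H|H]. left; now apply exp_increasing. subst; lra. Qed.

Lemma ln_ge0 x : 1 <= x -> 0 <= ln x.
Proof. intros [H|H]. left; rewrite <- ln_1; apply ln_increasing; lra. subst; rewrite ln_1; lra. Qed.

Lemma young g a b : 0 <= g <= 1 ->
  exp (g * a + (1 - g) * b) <= g * exp a + (1 - g) * exp b.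
Proof.
  intros Hg. set (m := g * a + (1 - g) * b).
  assert (Ea : exp a = exp m * exp (a - m)) by (rewrite <- exp_plus; f_equal; ring).
  assert (Eb : exp b = exp m * exp (b - m)) by (rewrite <- exp_plus; f_equal; ring).
  pose proof (exp_ineq1_le (a - m)). pose proof (exp_ineq1_le (b - m)).
  pose proof (exp_pos m).
  rewrite Ea, Eb.
  assert (g * (exp m * exp (a - m)) >= g * (exp m * (1 + (a - m)))) by (apply Rle_ge, Rmult_le_compat_l; [lra| apply Rmult_le_compat_l; lra]).
  assert ((1-g) * (exp m * exp (b - m)) >= (1-g) * (exp m * (1 + (b - m)))) by (apply Rle_ge, Rmult_le_compat_l; [lra| apply Rmult_le_compat_l; lra]).
  assert (g * (exp m * (1 + (a - m))) + (1-g) * (exp m * (1 + (b - m))) = exp m) by (unfold m; ring).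
  lra.
Qed.

Lemma sumR_app l1 l2 : sumR (l1 ++ l2) = sumR l1 + sumR l2.
Proof. induction l1; simpl; [ring| rewrite IHl1; ring]. Qed.

Lemma sumR_le {T} (f g : T -> R) l : (forall k, In k l -> f k <= g k) ->
  sumR (map f l) <= sumR (map g l).
Proof.
  induction l; simpl; intros H; [lra|].
  pose proof (H a (or_introl eq_refl)). pose proof (IHl (fun k Hk => H k (or_intror Hk))). lra.
Qed.

Lemma sumR_abs {T} (f : T -> R) l : Rabs (sumR (map f l)) <= sumR (map (fun k => Rabs (f k)) l).
Proof.
  induction l; simpl. rewrite Rabs_R0; lra.
  eapply Rle_trans. apply Rabs_triang. lra.
Qed.

Lemma sumR_scal {T} c (f : T -> R) l : sumR (map (fun k => c * f k) l) = c * sumR (map f l).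
Proof. induction l; simpl; [ring| rewrite IHl; ring]. Qed.

Lemma sumR_plus {T} (f g : T -> R) l : sumR (map (fun k => f k + g k) l) = sumR (map f l) + sumR (map g l).
Proof. induction l; simpl; [ring| rewrite IHl; ring]. Qed.

Lemma sumR_nonneg {T} (f : T -> R) l : (forall k, 0 <= f k) -> 0 <= sumR (map f l).
Proof. induction l; simpl; intros H; [lra|]. pose proof (H a); pose proof (IHl H); lra. Qed.

Lemma sum_A : forall m s, (1 <= s)%nat ->
  sumR (map (fun k => / (INR k)^2) (seq s m)) <= 2 / INR s - 2 / INR (s + m).
Proof.
  induction m; intros s Hs; cbn -[pow INR Rdiv].
  - rewrite Nat.add_0_r; lra.
  - pose proof (IHm (S s) ltac:(lia)).
    replace (S s + m)%nat with (s + S m)%nat in H by lia.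
    rewrite S_INR in H.
    assert (1 <= INR s) by (apply (le_INR 1); lia).
    assert (/ INR s ^ 2 <= 2 / INR s - 2 / (INR s + 1)).
    { assert (E: 2 / INR s - 2 / (INR s + 1) - / INR s ^ 2 = (INR s - 1) / (INR s ^ 2 * (INR s + 1))) by (field; lra).
      assert (0 <= (INR s - 1) / (INR s ^ 2 * (INR s + 1))).
      { apply Rmult_le_pos; [lra| apply Rlt_le, Rinv_0_lt_compat; nra]. }
      lra. }
    change (fold_right Rplus 0 ?l) with (sumR l); lra.
Qed.

Lemma key_ineq D : 1 <= D -> / D ^ 2 <= 2 / D - 2 / (D + 1).
Proof.
  intros Hs.
  assert (E: 2 / D - 2 / (D + 1) - / D ^ 2 = (D - 1) / (D ^ 2 * (D + 1))) by (field; lra).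
  assert (0 <= (D - 1) / (D ^ 2 * (D + 1))).
  { apply Rmult_le_pos; [lra| apply Rlt_le, Rinv_0_lt_compat; nra]. }
  lra.
Qed.

Lemma sum_B : forall m s j, (s + m <= j)%nat ->
  sumR (map (fun k => / (INR (j - k))^2) (seq s m)) <= 2 / INR (j - s - m + 1) - 2 / INR (j - s + 1).
Proof.
  induction m; intros s j Hs; cbn -[pow INR Rdiv].
  - rewrite Nat.sub_0_r; lra.
  - pose proof (IHm (S s) j ltac:(lia)).
    replace (j - S s - m + 1)%nat with (j - s - S m + 1)%nat in H by lia.
    replace (j - S s + 1)%nat with (j - s)%nat in H by lia.
    replace (j - s + 1)%nat with (S (j - s)) by lia. rewrite S_INR.
    assert (1 <= INR (j - s)) by (apply (le_INR 1); lia).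
    pose proof (key_ineq _ H0).
    change (fold_right Rplus 0 ?l) with (sumR l); lra.
Qed.

Lemma sum_y n : (2 <= n)%nat ->
  sumR (map (fun k => INR n ^ 2 / (16 * INR k ^ 2 * INR (n - k) ^ 2)) (seq 1 (n - 1))) <= 1.
Proof.
  intros Hn.
  eapply Rle_trans.
  apply (sumR_le _ (fun k => / 8 * (/ INR k ^ 2 + / INR (n - k) ^ 2))).
  - intros k Hk. apply in_seq in Hk. cbv beta.
    assert (Ek : INR n = INR k + INR (n - k)) by (rewrite <- plus_INR; f_equal; lia).
    assert (1 <= INR k) by (apply (le_INR 1); lia).
    assert (1 <= INR (n - k)) by (apply (le_INR 1); lia).
    rewrite Ek. set (a := INR k) in *. set (b := INR (n - k)) in *.
    assert (E : / 8 * (/ a ^ 2 + / b ^ 2) - (a + b) ^ 2 / (16 * a ^ 2 * b ^ 2)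
               = (a - b)^2 / (16 * a^2 * b^2)) by (field; lra).
    assert (0 <= (a - b)^2 / (16 * a^2 * b^2)).
    { apply Rmult_le_pos; [apply pow2_ge_0| apply Rlt_le, Rinv_0_lt_compat]. 
      assert (0 < a^2 * b^2) by (apply Rmult_lt_0_compat; nra). nra. }
    lra.
  - rewrite sumR_scal, sumR_plus.
    pose proof (sum_A (n - 1) 1 ltac:(lia)).
    pose proof (sum_B (n - 1) 1 n ltac:(lia)).
    replace (n - 1 - (n - 1) + 1)%nat with 1%nat in H0 by lia.
    assert (0 < INR (1 + (n - 1))) by (apply lt_0_INR; lia).
    assert (0 < INR (n - 1 + 1)) by (apply lt_0_INR; lia).
    assert (0 <= 2 / INR (1 + (n - 1))) by (apply Rmult_le_pos; [lra| apply Rlt_le, Rinv_0_lt_compat; lra]).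
    assert (0 <= 2 / INR (n - 1 + 1)) by (apply Rmult_le_pos; [lra| apply Rlt_le, Rinv_0_lt_compat; lra]).
    change (INR 1) with 1 in H, H0. lra.
Qed.

Lemma sumR_seq0 (g : nat -> R) n : sumR (map g (seq 0 (S n))) = sum_f_R0 g n.
Proof.
  induction n. simpl; ring.
  rewrite seq_S, map_app, sumR_app, IHn. simpl. ring.
Qed.

Lemma sum_x n : (2 <= n)%nat ->
  sumR (map (fun k => INR (fact n) / (INR (fact k) * INR (fact (n - k)))) (seq 1 (n - 1))) <= 2 ^ n.
Proof.
  intros Hn.
  pose proof (binomial 1 1 n). replace (1 + 1) with 2 in H by ring.
  rewrite <- sumR_seq0 in H.
  assert (Es : seq 0 (S n) = 0%nat :: seq 1 (n - 1) ++ (n :: nil)).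
  { replace (S n) with (S (S (n - 1))) by lia. rewrite seq_S. simpl. do 3 f_equal. lia. }
  rewrite Es in H. simpl map in H. rewrite map_app in H. cbn [sumR fold_right] in H.
  change (fold_right Rplus 0 (map ?f (seq 1 (n-1) ++ ?l))) with (sumR (map f (seq 1 (n-1)) ++ map f l)) in H.
  rewrite sumR_app in H. cbn [sumR fold_right map] in H.
  rewrite H. clear H.
  assert (forall i, 0 <= C n i * 1 ^ i * 1 ^ (n - i)).
  { intros i. rewrite !pow1, !Rmult_1_r. unfold C, Rdiv. apply Rmult_le_pos. apply pos_INR.
    apply Rlt_le, Rinv_0_lt_compat, Rmult_lt_0_compat; apply lt_0_INR, lt_O_fact. }
  pose proof (H 0%nat). pose proof (H n).
  assert (sumR (map (fun k => INR (fact n) / (INR (fact k) * INR (fact (n - k)))) (seq 1 (n - 1))) =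
          sumR (map (fun i => C n i * 1 ^ i * 1 ^ (n - i)) (seq 1 (n - 1)))).
  { f_equal. apply map_ext. intros. rewrite !pow1. unfold C. ring. }
  lra.
Qed.

Definition Bnd (C g : R) (m : nat) : R :=
  C ^ (m - 1) * exp (- (2 * (1 - g)) * ln (INR m) - g * ln (INR (fact m))).

Lemma Ngam_spec g : 0 < g <= 1 -> / g < INR (Ngam g) + 1.
Proof.
  intros Hg. unfold Ngam. destruct (base_Int_part (/ g)) as [H1 H2].
  assert (1 <= / g).
  { rewrite <- Rinv_1. apply Rinv_le_contravar; lra. }
  assert (0 <= Int_part (/ g))%Z.
  { apply le_IZR. assert (-1 < IZR (Int_part (/ g))) by lra.
    apply lt_IZR in H0. apply IZR_le. lia. }
  rewrite INR_IZR_INZ, Z2Nat.id by assumption. lra.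
Qed.

Lemma fact_pos m : 0 < INR (fact m).
Proof. apply lt_0_INR, lt_O_fact. Qed.

Lemma lnF_ge0 m : 0 <= ln (INR (fact m)).
Proof. apply ln_ge0. apply (le_INR 1), lt_O_fact. Qed.

Lemma sq_le_4pow n : (1 <= n)%nat -> INR n ^ 2 <= 4 ^ (n - 1).
Proof.
  induction n; intros H; [lia|].
  destruct n. simpl; lra.
  specialize (IHn ltac:(lia)).
  assert (E4 : 4 ^ (S (S n) - 1) = 4 * 4 ^ (S n - 1)) by (replace (S (S n) - 1)%nat with (S (S n - 1)) by lia; reflexivity).
  rewrite E4, (S_INR (S n)). assert (1 <= INR (S n)) by (apply (le_INR 1); lia). nra.
Qed.

Lemma base_bound C g n : 0 <= g <= 1 -> 4 <= C -> (1 <= n)%nat ->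
  / INR (fact n) <= Bnd C g n.
Proof.
  intros Hg HC Hn. unfold Bnd.
  set (F := INR (fact n)). assert (HF : 0 < F) by apply fact_pos.
  assert (Hn1 : 1 <= INR n) by (apply (le_INR 1); lia).
  assert (Hln : 0 <= ln (INR n)) by (apply ln_ge0; lra).
  assert (HlF : 0 <= ln F) by apply lnF_ge0.
  assert (E : exp (- (2 * ln (INR n) + ln F)) = / (INR n ^ 2 * F)).
  { rewrite exp_Ropp. f_equal. rewrite <- exp_ln with (x := INR n ^ 2 * F).
    f_equal. rewrite ln_mult, ln_pow by (try apply pow_lt; lra). simpl INR. ring.
    apply Rmult_lt_0_compat; [apply pow_lt; lra| lra]. }
  assert (Ele : exp (- (2 * ln (INR n) + ln F)) <= exp (- (2 * (1 - g)) * ln (INR n) - g * ln F)).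
  { apply exp_le_mono. nra. }
  rewrite E in Ele.
  pose proof (sq_le_4pow n Hn).
  assert (4 ^ (n - 1) <= C ^ (n - 1)) by (apply pow_incr; lra).
  assert (Hs : 0 < INR n ^ 2) by (apply pow_lt; lra).
  assert (/ F <= C ^ (n - 1) * / (INR n ^ 2 * F)).
  { rewrite Rinv_mult. replace (C ^ (n - 1) * (/ INR n ^ 2 * / F)) with ((C ^ (n - 1) / INR n ^ 2) * / F) by (unfold Rdiv; ring).
    rewrite <- (Rmult_1_l (/ F)) at 1. apply Rmult_le_compat_r. left; apply Rinv_0_lt_compat; lra.
    apply (Rmult_le_reg_r (INR n ^ 2)); auto. unfold Rdiv. rewrite Rmult_assoc, Rinv_l by lra. lra. }
  assert (0 <= C ^ (n - 1)) by (apply pow_le; lra).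
  eapply Rle_trans; [eassumption|]. apply Rmult_le_compat_l; auto.
Qed.

Definition Pexp (g : R) (n : nat) : R :=
  - (g * ln (INR (fact n))) + g * INR n * ln 2 + (1 - g) * ln 16 - 2 * (1 - g) * ln (INR n).

Lemma term_bound C g n k : 0 <= g <= 1 -> 0 < C -> (1 <= k)%nat -> (1 <= n - k)%nat ->
  Bnd C g k * Bnd C g (n - k) <=
  C ^ (n - 2) * exp (Pexp g n) *
   (g * (/ 2 ^ n * (INR (fact n) / (INR (fact k) * INR (fact (n - k)))))
    + (1 - g) * (INR n ^ 2 / (16 * INR k ^ 2 * INR (n - k) ^ 2))).
Proof.
  intros Hg HC Hk Hr. unfold Bnd.
  set (r := (n - k)%nat) in *.
  assert (Hnr : n = (k + r)%nat) by (unfold r; lia).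
  assert (Epow : C ^ (k - 1) * C ^ (r - 1) = C ^ (n - 2)).
  { rewrite <- pow_add. f_equal. lia. }
  assert (HkR : 0 < INR k) by (apply lt_0_INR; lia).
  assert (HrR : 0 < INR r) by (apply lt_0_INR; lia).
  assert (HnR : 0 < INR n) by (apply lt_0_INR; lia).
  pose proof (fact_pos n). pose proof (fact_pos k). pose proof (fact_pos r).
  set (x := / 2 ^ n * (INR (fact n) / (INR (fact k) * INR (fact r)))).
  set (y := INR n ^ 2 / (16 * INR k ^ 2 * INR r ^ 2)).
  assert (Hx : 0 < x).
  { unfold x. apply Rmult_lt_0_compat. apply Rinv_0_lt_compat, pow_lt; lra.
    apply Rdiv_lt_0_compat; auto. apply Rmult_lt_0_compat; auto. }
  assert (Hy : 0 < y).
  { unfold y. apply Rdiv_lt_0_compat. apply pow_lt; lra.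
    apply Rmult_lt_0_compat; [apply Rmult_lt_0_compat|]; try apply pow_lt; lra. }
  assert (Lx : ln x = ln (INR (fact n)) - ln (INR (fact k)) - ln (INR (fact r)) - INR n * ln 2).
  { assert (P2n : 0 < 2 ^ n) by (apply pow_lt; lra).
    assert (Pkr : 0 < INR (fact k) * INR (fact r)) by (apply Rmult_lt_0_compat; lra).
    unfold x, Rdiv. rewrite ln_mult by (try apply Rinv_0_lt_compat; try apply Rmult_lt_0_compat; try apply Rinv_0_lt_compat; lra).
    rewrite ln_Rinv, ln_pow by lra. rewrite ln_mult by (try apply Rinv_0_lt_compat; lra).
    rewrite ln_Rinv, ln_mult by lra. ring. }
  assert (Ly : ln y = 2 * ln (INR n) - ln 16 - 2 * ln (INR k) - 2 * ln (INR r)).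
  { assert (P1 : 0 < INR n ^ 2) by (apply pow_lt; lra).
    assert (P2 : 0 < INR k ^ 2) by (apply pow_lt; lra).
    assert (P3 : 0 < INR r ^ 2) by (apply pow_lt; lra).
    assert (P4 : 0 < 16 * INR k ^ 2) by lra.
    assert (P5 : 0 < 16 * INR k ^ 2 * INR r ^ 2) by (apply Rmult_lt_0_compat; lra).
    unfold y, Rdiv. rewrite ln_mult by (try apply Rinv_0_lt_compat; lra).
    rewrite ln_Rinv by lra. rewrite ln_mult by lra. rewrite ln_mult by lra.
    rewrite !ln_pow by lra.
    replace (INR 2) with 2 by (simpl; ring). ring. }
  pose proof (young g (ln x) (ln y) Hg) as Hyg. rewrite !exp_ln in Hyg by assumption.
  assert (Eexp : exp (- (2 * (1 - g)) * ln (INR k) - g * ln (INR (fact k))) *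
                 exp (- (2 * (1 - g)) * ln (INR r) - g * ln (INR (fact r)))
                 = exp (Pexp g n) * exp (g * ln x + (1 - g) * ln y)).
  { rewrite <- !exp_plus. f_equal. rewrite Lx, Ly. unfold Pexp. ring. }
  replace (C ^ (k - 1) * exp (- (2 * (1 - g)) * ln (INR k) - g * ln (INR (fact k))) *
    (C ^ (r - 1) * exp (- (2 * (1 - g)) * ln (INR r) - g * ln (INR (fact r)))))
    with ((C ^ (k - 1) * C ^ (r - 1)) * (exp (- (2 * (1 - g)) * ln (INR k) - g * ln (INR (fact k))) *
                 exp (- (2 * (1 - g)) * ln (INR r) - g * ln (INR (fact r))))) by ring.
  rewrite Epow, Eexp, Rmult_assoc. apply Rmult_le_compat_l. apply pow_le; lra.
  apply Rmult_le_compat_l. left; apply exp_pos. exact Hyg.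
Qed.

Lemma key_sum C g n : 0 <= g <= 1 -> 0 < C -> (2 <= n)%nat ->
  sumR (map (fun k => Bnd C g k * Bnd C g (n - k)) (seq 1 (n - 1))) <= C ^ (n - 2) * exp (Pexp g n).
Proof.
  intros Hg HC Hn.
  eapply Rle_trans.
  { apply sumR_le. intros k Hk. apply in_seq in Hk. apply term_bound; auto; lia. }
  rewrite sumR_scal, sumR_plus, !sumR_scal.
  pose proof (sum_x n Hn). pose proof (sum_y n Hn).
  assert (P2n : 0 < 2 ^ n) by (apply pow_lt; lra).
  assert (/ 2 ^ n * sumR (map (fun k => (INR (fact n) / (INR (fact k) * INR (fact (n - k))))) (seq 1 (n - 1))) <= 1).
  { apply (Rmult_le_reg_l (2 ^ n)); auto. rewrite <- Rmult_assoc, Rinv_r by lra. lra. }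
  assert (0 <= C ^ (n - 2) * exp (Pexp g n)).
  { apply Rmult_le_pos; [apply pow_le; lra| left; apply exp_pos]. }
  rewrite <- (Rmult_1_r (C ^ (n - 2) * exp (Pexp g n))) at 2.
  apply Rmult_le_compat_l; auto. nra.
Qed.

Definition X0 g := exp (g * (INR (Ngam g) + 1) * ln 2).
Definition Cst g := 16 * X0 g / (X0 g - 2).

Lemma X0_gt2 g : 0 < g <= 1 -> 2 < X0 g.
Proof.
  intros Hg. pose proof (Ngam_spec g Hg). unfold X0.
  assert (1 < g * (INR (Ngam g) + 1)).
  { apply (Rmult_lt_compat_l g) in H; [|lra]. rewrite Rinv_r in H; lra. }
  pose proof ln_lt_2. rewrite <- (exp_ln 2) at 1 by lra. apply exp_increasing. nra.
Qed.

Lemma Cst_ge g : 0 < g <= 1 -> 16 <= Cst g.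
Proof.
  intros Hg. pose proof (X0_gt2 g Hg). unfold Cst.
  apply (Rmult_le_reg_r (X0 g - 2)); [lra|]. unfold Rdiv. rewrite Rmult_assoc, Rinv_l by lra. lra.
Qed.

Lemma rec_bound g n : 0 < g <= 1 -> (Ngam g < n)%nat ->
  / (Rpower 2 (g * INR n) - 2) * (Cst g ^ (n - 2) * exp (Pexp g n)) <= Bnd (Cst g) g n
  /\ 0 < Rpower 2 (g * INR n) - 2.
Proof.
  intros Hg Hn. pose proof (X0_gt2 g Hg). pose proof (Cst_ge g Hg).
  pose proof (Ngam_spec g Hg).
  assert (Hn2 : (2 <= n)%nat).
  { destruct (Ngam g) eqn:E. simpl in H1. assert (1 <= / g).
    { rewrite <- Rinv_1. apply Rinv_le_contravar; lra. }
    assert (/ g = 1) by lra. assert (g = 1) by (rewrite <- (Rinv_inv g), H3; apply Rinv_1). subst g.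
    destruct n; [lia|]. destruct n; [|lia].
    exfalso. clear - E. unfold Ngam in E. rewrite Rinv_1 in E.
    assert (Int_part 1 = 1%Z).
    { unfold Int_part. rewrite <- (up_tech 1 1%Z); [reflexivity| simpl; lra | simpl; lra]. }
    rewrite H in E. simpl in E. discriminate. lia. }
  set (R2 := Rpower 2 (g * INR n)).
  assert (HR : X0 g <= R2).
  { unfold R2, Rpower, X0. apply exp_le_mono. apply Rmult_le_compat_r. left; pose proof ln_lt_2; lra.
    apply Rmult_le_compat_l; [lra|]. rewrite <- S_INR. apply le_INR. lia. }
  split; [|lra].
  unfold Bnd, Cst. unfold Cst in H0.
  set (X := X0 g) in *.
  set (C := 16 * X / (X - 2)) in *.
  assert (Ep : exp (Pexp g n) = exp (- (2 * (1 - g)) * ln (INR n) - g * ln (INR (fact n))) * R2 * exp ((1 - g) * ln 16)).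
  { unfold R2, Rpower. rewrite <- !exp_plus. f_equal. unfold Pexp. ring. }
  assert (E16 : exp ((1 - g) * ln 16) <= 16).
  { rewrite <- (exp_ln 16) at 2 by lra. apply exp_le_mono.
    assert (0 <= ln 16) by (apply ln_ge0; lra). nra. }
  assert (Cn : C ^ (n - 1) = C * C ^ (n - 2)).
  { replace (n - 1)%nat with (S (n - 2)) by lia. reflexivity. }
  rewrite Ep, Cn.
  set (e := exp (- (2 * (1 - g)) * ln (INR n) - g * ln (INR (fact n)))).
  assert (He : 0 < e) by apply exp_pos.
  assert (Hc : 0 <= C ^ (n - 2)) by (apply pow_le; lra).
  assert (KEY : R2 * 16 <= (R2 - 2) * C).
  { unfold C. apply (Rmult_le_reg_r (X - 2)); [lra|].
    replace ((R2 - 2) * (16 * X / (X - 2)) * (X - 2)) with ((R2 - 2) * (16 * X)) by (field; lra). nra. }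
  assert (R2 * exp ((1 - g) * ln 16) <= (R2 - 2) * C).
  { eapply Rle_trans; [|exact KEY]. apply Rmult_le_compat_l; lra. }
  apply (Rmult_le_reg_l (R2 - 2)); [lra|].
  rewrite <- Rmult_assoc, Rinv_r, Rmult_1_l by lra.
  assert (0 <= C ^ (n - 2) * e) by (apply Rmult_le_pos; lra).
  replace (C ^ (n - 2) * (e * R2 * exp ((1 - g) * ln 16))) with ((C ^ (n - 2) * e) * (R2 * exp ((1 - g) * ln 16))) by ring.
  replace ((R2 - 2) * (C * C ^ (n - 2) * e)) with ((C ^ (n - 2) * e) * ((R2 - 2) * C)) by ring.
  apply Rmult_le_compat_l; auto.
Qed.

Lemma main_ind g : 0 < g <= 1 -> forall f (A : Type) (w : list A),
  (length w < f)%nat -> w <> nil -> Rabs (qgam_fuel g f w) <= Bnd (Cst g) g (length w).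
Proof.
  intros Hg f. induction f as [|f IH]; intros A w Hl Hw; [lia|].
  pose proof (Cst_ge g Hg).
  assert (Hn1 : (1 <= length w)%nat) by (destruct w; [congruence| simpl; lia]).
  cbn [qgam_fuel].
  destruct (Nat.leb (length w) (Ngam g)) eqn:E.
  - unfold qchar. rewrite Rabs_right by (left; apply Rinv_0_lt_compat, fact_pos).
    apply base_bound; auto; lra.
  - apply Nat.leb_gt in E.
    destruct (rec_bound g (length w) Hg E) as [Hb Hpos].
    set (n := length w) in *.
    assert (Hn2 : (2 <= n)%nat).
    { pose proof (Ngam_spec g Hg). destruct (Nat.eq_dec n 1); [|lia].
      exfalso. destruct (Ngam g); [|lia]. simpl in H0.
      rewrite e in Hpos. simpl INR in Hpos. rewrite Rmult_1_r in Hpos.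
      unfold Rpower in Hpos. assert (g * ln 2 <= ln 2) by (pose proof ln_lt_2; nra).
      apply exp_le_mono in H1. rewrite exp_ln in H1; lra. }
    rewrite Rabs_mult, Rabs_right by (left; apply Rinv_0_lt_compat; lra).
    eapply Rle_trans; [|exact Hb].
    apply Rmult_le_compat_l; [left; apply Rinv_0_lt_compat; lra|].
    eapply Rle_trans; [apply sumR_abs|].
    eapply Rle_trans; [|apply key_sum; auto; lra].
    apply sumR_le. intros k Hk. apply in_seq in Hk. rewrite Rabs_mult.
    assert (L1 : length (firstn k w) = k) by (rewrite length_firstn; lia).
    assert (L2 : length (skipn k w) = (n - k)%nat) by (rewrite length_skipn; reflexivity).
    assert (N1 : firstn k w <> nil) by (intro Hc; rewrite Hc in L1; simpl in L1; lia).
    assert (N2 : skipn k w <> nil) by (intro Hc; rewrite Hc in L2; simpl in L2; lia).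
    pose proof (IH A (firstn k w) ltac:(lia) N1). pose proof (IH A (skipn k w) ltac:(lia) N2).
    rewrite L1 in H0. rewrite L2 in H1.
    apply Rmult_le_compat; auto; apply Rabs_pos.
Qed.

Theorem mainTheorem5 :
  forall gamma : R, 0 < gamma <= 1 ->
  exists C : R, 1 <= C /\
    forall (A : Type), Finite A ->
    forall w : list A, w <> nil ->
      Rabs (qgam gamma w) <= C ^ (length w - 1) / Rpower (INR (fact (length w))) gamma.
Proof.
  intros g Hg. exists (Cst g). pose proof (Cst_ge g Hg). split; [lra|].
  intros A _ w Hw. unfold qgam.
  eapply Rle_trans; [apply main_ind; auto|].
  unfold Bnd, Rpower. set (n := length w).
  assert (Hn1 : (1 <= n)%nat) by (unfold n; destruct w; [congruence| simpl; lia]).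
  assert (1 <= INR n) by (apply (le_INR 1); lia).
  assert (0 <= ln (INR n)) by (apply ln_ge0; lra).
  rewrite Rminus_def, exp_plus, exp_Ropp. unfold Rdiv.
  rewrite <- Rmult_assoc. apply Rmult_le_compat_r. left; apply Rinv_0_lt_compat, exp_pos.
  rewrite <- (Rmult_1_r (Cst g ^ (n - 1))) at 2.
  apply Rmult_le_compat_l. apply pow_le; lra.
  apply Rle_trans with (exp 0); [apply exp_le_mono; nra| rewrite exp_0; lra].
Qed.
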